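(* For every $\alpha>1$, the spherical scoring rule with parameter $\alpha$ on the forecast domain $\mathcal{D}=\Delta^n$, i.e. the scoring rule given by $G(\mathbf{p})=\big(\sum_{i=1}^n p_i^{\alpha}\big)^{1/\alpha}$, has convex exposure.
   Context: $\Delta^n$ is the standard simplex in $\mathbb{R}^n$. The scoring rule given by a differentiable strictly convex $G$ is $s(\mathbf{p};j)=G(\mathbf{p})+\langle\nabla G(\mathbf{p}),\delta_j-\mathbf{p}\rangle$ ($\delta_j$ the $j$-th standard basis vector). Its exposure function is $\mathbf{g}=\nabla G$, with values understood modulo translation by the all-ones vector (equivalently projected onto $\{\mathbf{x}:\sum_i x_i=0\}$). Convex exposure means the range of $\mathbf{g}$ is a convex set. *)

(* Defs.v *)
From mathcomp Require Import all_boot all_order all_algebra.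
From mathcomp Require Import all_classical all_reals all_analysis.
Import Order.TTheory GRing.Theory Num.Theory numFieldNormedType.Exports.

Set Implicit Arguments.
Unset Strict Implicit.
Unset Printing Implicit Defensive.

Local Open Scope ring_scope.
Local Open Scope classical_set_scope.

Definition simplex (R : realType) (n : nat) : set 'rV[R]_n :=
  [set p | (forall i, 0 <= p ord0 i) /\ \sum_(i < n) p ord0 i = 1].

(* It is defined on all of R^n via |p_i| (this agrees with the paper's G on
   the simplex and makes it differentiable in a neighbourhood of it). *)
Definition spherical_G (R : realType) (n : nat) (alpha : R)
    (p : 'rV[R]_n) : R :=
  (\sum_(i < n) `|p ord0 i| `^ alpha) `^ alpha^-1.

Definition gradient (R : realType) (n : nat) (G : 'rV[R]_n -> R)
    (p : 'rV[R]_n) : 'rV[R]_n :=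
  \row_(i < n) ('D_(delta_mx ord0 i) G p).

(* Orthogonal projection onto the hyperplane {x | sum_i x_i = 0}, i.e. the
   canonical representative modulo translation by the all-ones vector. *)
Definition proj_sum0 (R : realType) (n : nat) (x : 'rV[R]_n) : 'rV[R]_n :=
  x - ((\sum_(i < n) x ord0 i) / n%:R) *: const_mx 1.

Definition score (R : realType) (n : nat) (G : 'rV[R]_n -> R)
    (p : 'rV[R]_n) (j : 'I_n) : R :=
  G p + \sum_(i < n) gradient G p ord0 i * (delta_mx ord0 j - p) ord0 i.

(* Range of the exposure function g = grad G on the forecast domain Delta^n,
   taken modulo the all-ones vector (projected onto the sum-zero hyperplane). *)
Definition exposure_range (R : realType) (n : nat) (G : 'rV[R]_n -> R)
    : set 'rV[R]_n :=
  [set proj_sum0 (gradient G p) | p in @simplex R n].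

Definition convex_exposure (R : realType) (n : nat) (G : 'rV[R]_n -> R) :=
  convex_set (exposure_range G).

(* Main.v *)
Require Import Defs.
From mathcomp Require Import all_boot all_order all_algebra.
From mathcomp Require Import all_classical all_reals all_analysis.
Import Order.TTheory GRing.Theory Num.Theory numFieldNormedType.Exports.
From mathcomp Require Import ring lra.
Local Open Scope ring_scope.
Section S.
Local Open Scope classical_set_scope.
Variable R : realType.
Lemma normpow_cvg0 (a : R) : 0 < a -> `|x| `^ a @[x --> (0:R)] --> (0:R).
Proof.
move=> a0; apply/cvgrPdist_lt => e e0.
have d0 : 0 < e `^ a^-1 by rewrite powR_gt0.
move: (@pseudometric_normed_Zmodule.nbhs0_lt R R^o _ d0).
apply: filterS => x hx.
rewrite sub0r normrN (ger0_norm (powR_ge0 _ _)).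
have := @gt0_ltr_powR _ a a0 `|x| (e `^ a^-1).
rewrite -powRrM mulVf ?gt_eqF // powRr1 ?ltW //.
by apply => //; rewrite nnegrE ?powR_ge0.
Qed.
Lemma normpow_cont (a:R) : 0 < a -> continuous (fun x : R => `|x| `^ a).
Proof.
move=> a0 x; have [->|x0] := eqVneq x 0.
  rewrite /continuous_at normr0 powR0 ?gt_eqF //; exact: normpow_cvg0.
apply: (@continuous_comp _ _ _ (fun x : R => `|x|) (fun y => y `^ a)).
  exact: norm_continuous.
apply: differentiable_continuous; apply/derivable1_diffP.
by apply: derivable_powR; rewrite in_itv /= andbT normr_gt0.
Qed.
Lemma is_derive_cvg (f : R -> R) a l :
  (fun h => h^-1 * (f (h + a) - f a)) @ 0^' --> l -> is_derive a (1:R) f l.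
Proof.
move=> H.
have E : (fun h : R => h^-1 *: ((f \o shift a) (h *: 1) - f a)) =
         (fun h => h^-1 * (f (h + a) - f a)).
  by apply/funext => h /=; rewrite /shift [h *: 1]mulr1.
split; first by rewrite /derivable E; apply/cvg_ex; exists l.
by rewrite /derive E; exact: cvg_lim.
Qed.

Lemma is_derive_normpow0 (al : R) : 1 < al ->
  is_derive (0:R) (1:R) (fun h : R => `|h| `^ al) 0.
Proof.
move=> al1; apply: is_derive_cvg.
have a0 : 0 < al - 1 by rewrite subr_gt0.
have /cvgrPdist_lt H := @normpow_cvg0 (al - 1) a0.
apply/cvgrPdist_lt => e e0.
have H1 := nbhs_dnbhs (H e e0).
near=> h.
have h0 : h != 0 by near: h; exact: nbhs_dnbhs_neq.
have hl : `|0 - `|h| `^ (al - 1)| < e by near: h.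
move: hl; rewrite /= !addr0 normr0 powR0 ?gt_eqF ?(lt_trans _ al1) // subr0.
rewrite !sub0r !normrN => hl.
rewrite -(mulr_powRB1 (normr_ge0 h) (lt_trans ltr01 al1)) mulrA normrM normrM.
by rewrite normfV normr_id mulVf ?normr_eq0 // mul1r.
Unshelve. all: by end_near. Qed.
Lemma is_derive1_comp (f g : R -> R) x df dg :
  is_derive x (1:R) f df -> is_derive (f x) (1:R) g dg ->
  is_derive x (1:R) (g \o f) (dg * df).
Proof.
move=> hf hg; split.
  apply/derivable1_diffP; apply: differentiable_comp; apply/derivable1_diffP;
  exact: ex_derive.
by rewrite -derive1E derive1_comp ?derive1E ?derive_val //; exact: ex_derive.
Qed.

Lemma is_derive_normpow (al c : R) : 1 < al -> 0 <= c ->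
  is_derive (0:R) (1:R) (fun h : R => `|h + c| `^ al) (al * c `^ (al - 1)).
Proof.
move=> al1 c0; have al0 : 0 < al by exact: lt_trans al1.
rewrite le_eqVlt in c0; case/orP: c0 => [/eqP <-|c0].
  rewrite powR0 ?subr_eq0 ?gt_eqF // mulr0.
  have -> : (fun h : R => `|h + 0| `^ al) = (fun h : R => `|h| `^ al).
    by apply/funext => h; rewrite addr0.
  exact: is_derive_normpow0.
have H : is_derive (0:R) (1:R) ((fun y : R => y `^ al) \o shift c) (al * c `^ (al - 1) * 1).
  apply: is_derive1_comp; first exact: is_derive_shift.
  by rewrite /shift add0r; apply: is_derive1_powR.
rewrite mulr1 in H; apply: (near_eq_is_derive _ H).
have := @pseudometric_normed_Zmodule.nbhs0_lt R R^o _ c0.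
apply: filterS => h hc /=; rewrite /shift gtr0_norm //.
have := ltrNnormlW hc; lra.
Qed.
Lemma D_line n (f : 'rV[R]_n -> R) (a v : 'rV[R]_n) :
  'D_v f a = 'D_(1:R) (fun h : R => f (h *: v + a)) 0.
Proof.
rewrite /derive.
set F := (fun h : R => _ *: (_ - f a)).
match goal with |- _ = lim (?G @ _) => suff -> : G = F by [] end.
apply/funext => h; rewrite /F /= /shift.
by rewrite addr0 scale0r add0r [h%:A]mulr1.
Qed.

Lemma grad_G n (al : R) (p : 'rV[R]_n) (i : 'I_n) : 1 < al ->
  0 <= p ord0 i -> 0 < \sum_(k < n) `|p ord0 k| `^ al ->
  'D_(delta_mx ord0 i) (@spherical_G R n al) p =
   (\sum_(k < n) `|p ord0 k| `^ al) `^ (al^-1 - 1) * p ord0 i `^ (al - 1).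
Proof.
move=> al1 pi0 S0; have al0 : 0 < al by exact: lt_trans al1.
set S := \sum_(k < n) _ in S0 *.
pose C := \sum_(k < n | k != i) `|p ord0 k| `^ al.
have E : (fun h : R => spherical_G al (h *: delta_mx ord0 i + p)) =
   (fun s => s `^ al^-1) \o (cst C + (fun h : R => `|h + p ord0 i| `^ al)).
  apply/funext => h /=; rewrite /spherical_G; congr (_ `^ _).
  rewrite (bigD1 i) //= addrC; congr (_ + _).
    apply: eq_bigr => k ki; rewrite !mxE /=.
    by rewrite (negbTE ki) mulr0 add0r.
  by rewrite !mxE !eqxx /= mulr1.
rewrite D_line E.
have SE : S = C + `|0 + p ord0 i| `^ al.
  by rewrite /S (bigD1 i) //= add0r addrC.
have H : is_derive (0:R) (1:R) ((fun s => s `^ al^-1) \o (cst C + (fun h : R => `|h + p ord0 i| `^ al)))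
   ((al^-1 * S `^ (al^-1 - 1)) * (0 + al * p ord0 i `^ (al - 1))).
  apply: is_derive1_comp.
    apply: is_deriveD.
    exact: is_derive_normpow.
  have -> : (cst C + (fun h : R => `|h + p ord0 i| `^ al)) 0 = S by rewrite SE.
  exact: is_derive1_powR.
rewrite (derive_val (is_derive := H)) add0r.
have : al != 0 by rewrite gt_eqF.
move: (S `^ _) (p ord0 i `^ _) => a b an0.
by field.
Qed.
Lemma sumcont n (F : 'I_n -> R -> R) : (forall i, continuous (F i)) ->
  continuous (fun s => \sum_(i < n) F i s).
Proof.
move=> Fc; rewrite -fct_sumE.
apply: (big_ind (fun f : R -> R => continuous f)).
- have -> : (0 : R -> R) = cst 0 by [].
  exact: cst_continuous.
- by move=> f g fc gc x; exact: continuousD (fc x) (gc x).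
- by move=> i _; exact: Fc.
Qed.

Lemma shift_exists n (q : R) (w : 'rV[R]_n) : (0 < n)%N -> 0 < q ->
  (forall i, 0 <= w ord0 i) -> \sum_(i < n) w ord0 i `^ q <= 1 ->
  exists2 s, 0 <= s & \sum_(i < n) (w ord0 i + s) `^ q = 1.
Proof.
move=> n0 q0 w0 wle.
pose f := fun s : R => \sum_(i < n) `|w ord0 i + s| `^ q.
have fc : continuous f.
  apply: sumcont => i x.
  apply: (@continuous_comp _ _ _ (fun s : R => w ord0 i + s) (fun y => `|y| `^ q)).
    apply: cvgD; [exact: cvg_cst | exact: cvg_id].
  exact: (@normpow_cont q q0 (w ord0 i + x)).

have f0 : f 0 <= 1.
  by rewrite /f (eq_bigr (fun i => w ord0 i `^ q)) // => i _; rewrite addr0 ger0_norm.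
have f1 : 1 <= f 1.
  rewrite /f (bigD1 (Ordinal n0)) //=.
  have h1 : 1 <= `|w ord0 (Ordinal n0) + 1| `^ q.
    have ha := w0 (Ordinal n0).
    have hn : `|w ord0 (Ordinal n0) + 1| = w ord0 (Ordinal n0) + 1.
      by rewrite ger0_norm //; lra.
    have e1 : (1:R) = 1 `^ q by rewrite powR1.
    rewrite hn {1}e1; apply: ge0_ler_powR; rewrite ?nnegrE; try lra.
  apply: (le_trans h1); rewrite lerDl; apply: sumr_ge0 => i _; exact: powR_ge0.
have [c c01 fc1] := @IVT R f 0 1 1 ler01 (continuous_subspaceT fc)
  (ltac:(by rewrite ge_min f0 /= le_max f1 orbT)).
exists c; first by move: c01; rewrite in_itv /= => /andP[].
rewrite -fc1 /f; apply: eq_bigr => i _; rewrite ger0_norm // addr_ge0 //.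
by move: c01; rewrite in_itv /= => /andP[].
Qed.
Lemma S_pos n (al : R) (p : 'rV[R]_n) : 0 < al -> (forall i, 0 <= p ord0 i) ->
  \sum_(i < n) p ord0 i = 1 -> 0 < \sum_(i < n) `|p ord0 i| `^ al.
Proof.
move=> al0 p0 p1; rewrite lt_neqAle sumr_ge0 ?andbT; last by move=> i _; exact: powR_ge0.
apply/negP => /eqP /esym /psumr_eq0P H.
have : \sum_(i < n) p ord0 i = 0.
  apply: big1 => i _; apply: normr0_eq0; apply: (@powR_eq0_eq0 _ _ al).
  by apply: H => // j _; exact: powR_ge0.
by rewrite p1 => /eqP; rewrite oner_eq0.
Qed.

Lemma grad_simplex n (al : R) (p : 'rV[R]_n) : 1 < al -> @simplex R n p ->
  gradient (@spherical_G R n al) p =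
  \row_i ((\sum_(k < n) `|p ord0 k| `^ al) `^ (al^-1 - 1) * p ord0 i `^ (al - 1)).
Proof.
move=> al1 [p0 p1]; apply/rowP => i; rewrite !mxE grad_G //.
exact: S_pos (lt_trans ltr01 al1) p0 p1.
Qed.
Lemma surj n (al : R) (z : 'rV[R]_n) : 1 < al -> (forall i, 0 <= z ord0 i) ->
  \sum_(i < n) z ord0 i `^ (al / (al - 1)) = 1 ->
  exists2 p, @simplex R n p & gradient (@spherical_G R n al) p = z.
Proof.
move=> al1 z0 z1.
have al0 : 0 < al by exact: lt_trans al1.
have b0 : 0 < al - 1 by rewrite subr_gt0.
have q0 : al / (al - 1) != 0 by rewrite mulf_neq0 ?invr_eq0 ?gt_eqF.
pose r := (al - 1)^-1.
pose y := \row_i (z ord0 i `^ r).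
pose T := \sum_(i < n) y ord0 i.
have y0 : forall i, 0 <= y ord0 i by move=> i; rewrite mxE powR_ge0.
have T0 : 0 < T.
  rewrite lt_neqAle sumr_ge0 ?andbT; last by move=> i _; exact: y0.
  apply/negP => /eqP /esym /psumr_eq0P H.
  have : \sum_(i < n) z ord0 i `^ (al / (al - 1)) = 0.
    apply: big1 => i _.
    have := H (fun j _ => y0 j) i isT; rewrite mxE => /powR_eq0_eq0 ->.
    by rewrite powR0.
  by rewrite z1 => /eqP; rewrite oner_eq0.
pose p := T^-1 *: y.
have pE : forall i, p ord0 i = T^-1 * z ord0 i `^ r by move=> i; rewrite !mxE.
have p0 : forall i, 0 <= p ord0 i.
  by move=> i; rewrite pE mulr_ge0 ?invr_ge0 ?powR_ge0 // ltW.
have ps : @simplex R n p.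
  split => //; under eq_bigr do rewrite pE.
  have TE : T = \sum_(i < n) z ord0 i `^ r by apply: eq_bigr => i _; rewrite mxE.
  by rewrite -mulr_sumr -TE mulVf ?gt_eqF.
exists p => //.
have Sp : \sum_(k < n) `|p ord0 k| `^ al = T^-1 `^ al.
  transitivity (\sum_(k < n) T^-1 `^ al * z ord0 k `^ (al / (al - 1))).
    apply: eq_bigr => k _; rewrite ger0_norm // pE powRM ?invr_ge0 ?powR_ge0 ?(ltW T0) //.
    by rewrite -powRrM /r [_ * al]mulrC.
  by rewrite -mulr_sumr z1 mulr1.
rewrite grad_simplex // Sp; apply/rowP => i; rewrite mxE pE.
rewrite powRM ?invr_ge0 ?powR_ge0 ?(ltW T0) // -!powRrM /r mulVf ?gt_eqF // powRr1 //.
have -> : al * (al^-1 - 1) = - (al - 1) by field; rewrite gt_eqF.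
rewrite powRN mulrA mulVf ?mul1r // gt_eqF // powR_gt0 // invr_gt0 //.
Qed.
Lemma grad_props n (al : R) (p : 'rV[R]_n) : 1 < al -> @simplex R n p ->
  (forall i, 0 <= gradient (@spherical_G R n al) p ord0 i) /\
  \sum_(i < n) (gradient (@spherical_G R n al) p ord0 i) `^ (al / (al - 1)) = 1.
Proof.
move=> al1 ps; have al0 : 0 < al by exact: lt_trans al1.
have b0 : al - 1 != 0 by rewrite subr_eq0 gt_eqF.
have S0 := @S_pos n al p al0 ps.1 ps.2.
rewrite grad_simplex //.
set S := \sum_(k < n) _ in S0 *.
have SE : S = \sum_(k < n) p ord0 k `^ al.
  by apply: eq_bigr => k _; rewrite ger0_norm //; exact: ps.1.
split => [i|]; first by rewrite mxE mulr_ge0 ?powR_ge0.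
transitivity (\sum_(i < n) S^-1 * p ord0 i `^ al); last first.
  by rewrite -mulr_sumr -SE mulVf ?gt_eqF.
apply: eq_bigr => i _; rewrite mxE (powRM _ (powR_ge0 _ _) (powR_ge0 _ _)) -!powRrM.
have -> : (al^-1 - 1) * (al / (al - 1)) = - 1.
  by field; rewrite b0 gt_eqF.
have -> : (al - 1) * (al / (al - 1)) = al by field.
by rewrite powRN powRr1 // ltW.
Qed.
Lemma core n (al : R) (u v : 'rV[R]_n) (t : {i01 R}) : 1 < al -> (0 < n)%N ->
  (forall i, 0 <= u ord0 i) -> \sum_(i < n) u ord0 i `^ (al / (al - 1)) = 1 ->
  (forall i, 0 <= v ord0 i) -> \sum_(i < n) v ord0 i `^ (al / (al - 1)) = 1 ->
  exists2 p, @simplex R n p &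
    proj_sum0 (gradient (@spherical_G R n al) p) =
    t%:num *: proj_sum0 u + (1 - t%:num) *: proj_sum0 v.
Proof.
move=> al1 n0 u0 u1 v0 v1.
have t0 : 0 <= t%:num by [].
have t1 : t%:num <= 1 by [].
set tt := t%:num.

have q1 : 1 <= al / (al - 1).
  by rewrite ler_pdivlMr ?subr_gt0 // mul1r gerBl.
have q0 : 0 < al / (al - 1) by exact: lt_le_trans q1.
have t2 : 0 <= 1 - tt by rewrite subr_ge0.
pose w : 'rV[R]_n := \row_i (tt * u ord0 i + (1 - tt) * v ord0 i).
have wE : forall i, w ord0 i = tt * u ord0 i + (1 - tt) * v ord0 i.
  by move=> i; rewrite mxE.
have w0 : forall i, 0 <= w ord0 i.
  by move=> i; rewrite wE addr_ge0 // mulr_ge0.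
have wle : \sum_(i < n) w ord0 i `^ (al / (al - 1)) <= 1.
  have cv := convex_powR q1.
  apply: (@le_trans _ _ (\sum_(i < n) (tt * u ord0 i `^ (al / (al - 1)) +
            (1 - tt) * v ord0 i `^ (al / (al - 1))))).
    apply: ler_sum => i _.
    have := cv t (u ord0 i) (v ord0 i).
    rewrite !convRE wE => H; apply: H; rewrite inE /= in_itv /= andbT; [exact: u0|exact: v0].
  by rewrite big_split /= -!mulr_sumr u1 v1 !mulr1 addrC subrK.
have [s s0 s1] := @shift_exists n (al / (al - 1)) w n0 q0 w0 wle.
pose z : 'rV[R]_n := \row_i (w ord0 i + s).
have zE : forall i, z ord0 i = w ord0 i + s by move=> i; rewrite [LHS]mxE.
have [p ps pz] : exists2 p, @simplex R n p & gradient (@spherical_G R n al) p = z.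
  apply: surj => //.
    by move=> i; rewrite zE; exact: addr_ge0 (w0 i) s0.
  by under eq_bigr do rewrite zE.
exists p => //; rewrite pz.
have nz : (n%:R : R) != 0 by rewrite pnatr_eq0 -lt0n.
have Sz : \sum_(i < n) z ord0 i =
    tt * \sum_(i < n) u ord0 i + (1 - tt) * \sum_(i < n) v ord0 i + s * n%:R.
  under eq_bigr do rewrite zE wE.
  by rewrite !big_split /= sumr_const card_ord -!mulr_sumr mulr_natr.
apply/rowP => j; rewrite /proj_sum0 !mxE Sz.
change (u 0 j) with (u ord0 j); change (v 0 j) with (v ord0 j).
by field.
Qed.
End S.
Theorem propositionF5 (R : realType) (n : nat) (alpha : R) :
  1 < alpha -> convex_exposure (@spherical_G R n alpha).
Proof.
move=> al1 x y t /set_mem [p ps <-] /set_mem [p' ps' <-]; apply/mem_set.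
have n0 : (0 < n)%N.
  case: (posnP n) => [n0|//]; subst n.
  by move: ps => [_]; rewrite big_ord0 => /eqP; rewrite eq_sym oner_eq0.
have [u0 u1] := @grad_props R n alpha p al1 ps.
have [v0 v1] := @grad_props R n alpha p' al1 ps'.
have [q qs E] := @core R n alpha _ _ t al1 n0 u0 u1 v0 v1.
exists q => //; rewrite E.
Qed.
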